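(* Let $A$ be an arborally satisfied set that is doubly congruent with a BST $T$. Then for any top tree $\tau$ of $T$, if the keys of $\tau$ are accessed (i.e. a point $(c,k)$ is added for each key $k$ of $\tau$) along a single column $c$, where $c$ is either the leftmost column of $A$, the rightmost column of $A$, the column immediately to the left of the leftmost column of $A$, or the column immediately to the right of the rightmost column of $A$, then the resulting set of points is arborally satisfied.
   Context: Point sets live in the grid plane, with the horizontal axis being time (columns) and the vertical axis being key (rows). A set $P$ of points is arborally satisfied if for every two points $x,y\in P$ not on a common horizontal or vertical line, the closed axis-parallel rectangle with corners $x$ and $y$ contains at least one point of $P$ other than $x,y$. A treap over pairs (key, priority) is a BST on keys that is a heap on priorities (higher priority nearer the root); ties in priority are grouped into multi-nodes, giving a multi-treap, in which each multi-node holds keys of equal priority and has children consistent with an underlying BST order (a multi-node may have up to one more child than its number of keys). For an arborally satisfied set $A$ whose rows are the keys of $T$, the left (right) priority of a row is the distance from the left (right) boundary of $A$ to the first point of $A$ in that row, smaller distance meaning higher priority. The left (right) multi-treap of $A$ is the multi-treap on these (row, priority) pairs. $T$ is left (right) congruent with $A$ if there is a choice of binary search tree structure inside each multi-node of the left (right) multi-treap of $A$ making the resulting tree equal to $T$; $T$ is doubly congruent with $A$ if it is both left and right congruent. A top tree of $T$ is a connected set of nodes containing the root. *)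

(* Defs.v *)
From mathcomp Require Import all_boot all_order all_algebra.
Set Implicit Arguments. Unset Strict Implicit. Unset Printing Implicit Defensive.
Import Order.TTheory GRing.Theory Num.Theory.
Local Open Scope ring_scope.

(* A point of the grid plane: (time/column, key/row). *)
Definition point := (int * int)%type.
Definition col (p : point) : int := p.1.
Definition row (p : point) : int := p.2.

Definition arborally_satisfied (P : seq point) : Prop :=
  forall x y, x \in P -> y \in P -> col x != col y -> row x != row y ->
    exists2 z, z \in P &
      [/\ z != x, z != y,
          Num.min (col x) (col y) <= col z <= Num.max (col x) (col y) &
          Num.min (row x) (row y) <= row z <= Num.max (row x) (row y)].

(* minimum / maximum of a (nonempty) list of integers (0 on the empty list) *)
Definition minl (s : seq int) : int := foldr Num.min (head 0 s) s.
Definition maxl (s : seq int) : int := foldr Num.max (head 0 s) s.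

Definition leftmost_col (A : seq point) : int := minl (map col A).
Definition rightmost_col (A : seq point) : int := maxl (map col A).
Definition rows (A : seq point) : seq int := map row A.
Definition row_cols (A : seq point) (r : int) : seq int :=
  [seq col p | p <- A & row p == r].

(* left (right) priority of row r, as a distance: smaller = higher priority *)
Definition left_dist (A : seq point) (r : int) : int :=
  minl (row_cols A r) - leftmost_col A.
Definition right_dist (A : seq point) (r : int) : int :=
  rightmost_col A - maxl (row_cols A r).

Inductive bst := Leaf | Node of bst & int & bst.

Fixpoint inorder (t : bst) : seq int :=
  match t with Leaf => [::] | Node l k r => inorder l ++ k :: inorder r end.

Definition root_seq (t : bst) : seq int :=
  match t with Leaf => [::] | Node _ k _ => [:: k] end.

Definition is_bst (t : bst) : bool := sorted <%R (inorder t).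

(* heap property w.r.t. a distance d (smaller distance = higher priority,
   higher priority nearer the root; ties allowed) *)
Fixpoint heap_dist (d : int -> int) (t : bst) : bool :=
  match t with
  | Leaf => true
  | Node l k r =>
      [&& all (fun x => d k <= d x) (root_seq l ++ root_seq r),
          heap_dist d l & heap_dist d r]
  end.

Definition is_treap_on (keys : seq int) (d : int -> int) (T : bst) : Prop :=
  [/\ inorder T =i keys, is_bst T & heap_dist d T].

Definition left_congruent (A : seq point) (T : bst) : Prop :=
  is_treap_on (rows A) (left_dist A) T.
Definition right_congruent (A : seq point) (T : bst) : Prop :=
  is_treap_on (rows A) (right_dist A) T.
Definition doubly_congruent (A : seq point) (T : bst) : Prop :=
  left_congruent A T /\ right_congruent A T.

(* t is obtained from T by pruning subtrees: its nodes form a connected set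
   containing the root of T (when t is not a leaf). *)
Fixpoint is_prefix (t T : bst) : bool :=
  match t, T with
  | Leaf, _ => true
  | Node l k r, Node L K R => [&& k == K, is_prefix l L & is_prefix r R]
  | _, _ => false
  end.

Definition is_leaf (t : bst) : bool := if t is Leaf then true else false.
Definition top_tree (tau T : bst) : bool := ~~ is_leaf tau && is_prefix tau T.

Definition access_column (A : seq point) (c : int) (tau : bst) : seq point :=
  A ++ [seq (c, k) | k <- inorder tau].

(* Main.v *)
Require Import Defs.
From mathcomp Require Import all_boot all_order all_algebra zify.
Import Order.TTheory GRing.Theory Num.Theory.
Local Open Scope ring_scope.

Lemma foldr_min_le (a : int) s (x : int) : x \in a :: s -> foldr Num.min a s <= x.
Proof.
elim: s x => [|b s IH] x /=; first by rewrite inE => /eqP ->.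
rewrite !inE => /orP [/eqP ->|/orP [/eqP ->|H]].
- have := IH a; rewrite inE eqxx /= => /(_ isT) h; by rewrite ge_min h orbT.
- by rewrite ge_min lexx.
- have := IH x; rewrite inE H orbT => /(_ isT) h; by rewrite ge_min h orbT.
Qed.

Lemma foldr_min_mem (a : int) s : foldr Num.min a s \in a :: s.
Proof.
elim: s => [|b s IH] /=; first by rewrite inE.
rewrite /Num.min; case: ifP => _; rewrite !inE ?eqxx ?orbT //.
move: IH; rewrite !inE => /orP [->|->]; by rewrite ?orbT.
Qed.

Lemma foldr_max_ge (a : int) s (x : int) : x \in a :: s -> x <= foldr Num.max a s.
Proof.
elim: s x => [|b s IH] x /=; first by rewrite inE => /eqP ->.
rewrite !inE => /orP [/eqP ->|/orP [/eqP ->|H]].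
- have := IH a; rewrite inE eqxx /= => /(_ isT) h; by rewrite le_max h orbT.
- by rewrite le_max lexx.
- have := IH x; rewrite inE H orbT => /(_ isT) h; by rewrite le_max h orbT.
Qed.

Lemma foldr_max_mem (a : int) s : foldr Num.max a s \in a :: s.
Proof.
elim: s => [|b s IH] /=; first by rewrite inE.
rewrite /Num.max; case: ifP => _; rewrite !inE ?eqxx ?orbT //.
move: IH; rewrite !inE => /orP [->|->]; by rewrite ?orbT.
Qed.

Lemma minl_le s x : x \in s -> minl s <= x.
Proof. case: s => [//|b s] H; apply: foldr_min_le; by rewrite inE H orbT. Qed.
Lemma maxl_ge s x : x \in s -> x <= maxl s.
Proof. case: s => [//|b s] H; apply: foldr_max_ge; by rewrite inE H orbT. Qed.
Lemma minl_mem s : s != [::] -> minl s \in s.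
Proof.
case: s => [//|b s] _; rewrite /minl /=.
have := foldr_min_mem b (b :: s); rewrite /= inE => /orP [/eqP ->|//]; by rewrite inE eqxx.
Qed.
Lemma maxl_mem s : s != [::] -> maxl s \in s.
Proof.
case: s => [//|b s] _; rewrite /maxl /=.
have := foldr_max_mem b (b :: s); rewrite /= inE => /orP [/eqP ->|//]; by rewrite inE eqxx.
Qed.

Lemma prefix_sub t T : is_prefix t T -> {subset inorder t <= inorder T}.
Proof.
elim: T t => [|L IHL K R IHR] [|l k r] //= /and3P [/eqP -> pl pr] x.
rewrite !mem_cat !inE => /orP [/IHL->//|/orP [->|/IHR->]]; by rewrite ?orbT.
Qed.

Lemma heap_root d t : heap_dist d t ->
  match t with Leaf => True | Node _ k _ => forall x, x \in inorder t -> d k <= d x end.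
Proof.
elim: t => [//|l IHl k r IHr] /= /and3P [Hall Hl Hr] x.
move: (IHl Hl) (IHr Hr) Hall => {IHl IHr Hl Hr}.
rewrite mem_cat inE => H1 H2 Hall /orP [Hx|/orP [/eqP ->//|Hx]].
- case: l Hx H1 Hall => [//|l' k' r'] Hx H1 /= => /andP [h _].
  exact: le_trans h (H1 _ Hx).
- case: r Hx H2 Hall => [//|l' k' r'] Hx H2 /=; rewrite all_cat /= => /andP [_ /andP [h _]].
  exact: le_trans h (H2 _ Hx).
Qed.

Lemma bst_split L K R : is_bst (Node L K R) ->
  [/\ is_bst L, is_bst R, {in inorder L, forall x, x < K} & {in inorder R, forall y, K < y}].
Proof.
rewrite /is_bst /= !(sorted_pairwise lt_trans) pairwise_cat pairwise_cons.
case/and3P => /allrelP Hrel pL /andP [/allP HK pR]; split => //.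
move=> x Hx; apply: Hrel => //; by rewrite inE eqxx.
Qed.

Lemma key_lemma d T : is_bst T -> heap_dist d T -> forall tau, is_prefix tau T ->
  forall k r : int, k \in inorder tau -> r \in inorder T ->
  (forall k' : int, k' \in inorder tau -> k' != k -> (k <= k' <= r) || (r <= k' <= k) -> False) ->
  d k <= d r.
Proof.
elim: T => [|L IHL K R IHR] //= Hb Hh [|l K' r'] //= /and3P [/eqP EK pl pr] k r.
subst K'.
have [bL bR ltL gtR] := bst_split _ _ _ Hb.
have Hroot := heap_root d (Node L K R) Hh.
move: Hh => /= /and3P [_ hL hR].
rewrite !mem_cat !inE => Hk Hr Hno.
case/orP: Hk => [Hk|/orP [/eqP Ek|Hk]].
- have kL := prefix_sub _ _ pl _ Hk. have := ltL _ kL => kK.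
  case/orP: Hr => [Hr|/orP [/eqP Er|Hr]].
  + apply: (IHL bL hL l pl) => // k' Hk'; apply: Hno; by rewrite mem_cat Hk'.
  + exfalso; apply: (Hno K); rewrite ?mem_cat ?inE ?eqxx ?orbT //; lia.
  + exfalso; have := gtR _ Hr => rK; apply: (Hno K); rewrite ?mem_cat ?inE ?eqxx ?orbT //; lia.
- subst k; apply: Hroot; by rewrite mem_cat inE Hr.
- have kR := prefix_sub _ _ pr _ Hk. have := gtR _ kR => kK.
  case/orP: Hr => [Hr|/orP [/eqP Er|Hr]].
  + exfalso; have := ltL _ Hr => rK; apply: (Hno K); rewrite ?mem_cat ?inE ?eqxx ?orbT //; lia.
  + exfalso; apply: (Hno K); rewrite ?mem_cat ?inE ?eqxx ?orbT //; lia.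
  + apply: (IHR bR hR r' pr) => // k' Hk'; apply: Hno; by rewrite mem_cat inE Hk' !orbT.
Qed.

Local Notation pcol := Defs.col.
Local Notation prow := Defs.row.
Set Implicit Arguments.

Lemma row_cols_witness A (k : int) : k \in rows A ->
  exists2 q, q \in A & (prow q = k /\ pcol q = minl (row_cols A k)).
Proof.
move=> /mapP [p pA ->].
have : minl (row_cols A (prow p)) \in row_cols A (prow p).
  apply: minl_mem; apply/eqP => E.
  have : pcol p \in row_cols A (prow p) by apply: map_f; rewrite mem_filter eqxx pA.
  by rewrite E.
move=> /mapP [q]; rewrite mem_filter => /andP [/eqP Eq qA] ->.
by exists q.
Qed.

Lemma row_cols_witness_max A (k : int) : k \in rows A ->
  exists2 q, q \in A & (prow q = k /\ pcol q = maxl (row_cols A k)).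
Proof.
move=> /mapP [p pA ->].
have : maxl (row_cols A (prow p)) \in row_cols A (prow p).
  apply: maxl_mem; apply/eqP => E.
  have : pcol p \in row_cols A (prow p) by apply: map_f; rewrite mem_filter eqxx pA.
  by rewrite E.
move=> /mapP [q]; rewrite mem_filter => /andP [/eqP Eq qA] ->.
by exists q.
Qed.

Lemma in_row_cols A (y : point) : y \in A -> pcol y \in row_cols A (prow y).
Proof. by move=> yA; apply: map_f; rewrite mem_filter eqxx yA. Qed.

Lemma core A T tau (c k : int) (y : point) (d : int -> int) :
  arborally_satisfied A -> is_treap_on (rows A) d T -> is_prefix tau T ->
  k \in inorder tau -> y \in A -> c != pcol y -> k != prow y ->
  (d k <= d (prow y) -> exists2 q : point, q \in A &
     prow q = k /\ Num.min c (pcol y) <= pcol q <= Num.max c (pcol y)) ->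
  exists2 z, z \in access_column A c tau &
      [/\ z != (c, k), z != y,
          Num.min c (pcol y) <= pcol z <= Num.max c (pcol y) &
          Num.min k (prow y) <= prow z <= Num.max k (prow y)].
Proof.
move=> HA [Hin Hb Hh] Hpre Hk yA Hc Hr Hq.
have PA : {subset A <= access_column A c tau} by move=> p pA; rewrite mem_cat pA.
case: (boolP ((c, k) \in A)) => xA.
  have [z zA [z1 z2 z3 z4]] := HA _ _ xA yA Hc Hr.
  by exists z => //; apply: PA.
case: (boolP (has (fun k' => (k' != k) && ((k <= k' <= prow y) || (prow y <= k' <= k))) (inorder tau))).
  move=> /hasP [k' k'tau /andP [nk' btw]].
  exists (c, k'); first by rewrite mem_cat (map_f (fun k => (c, k)) k'tau) orbT.
  split.
  - apply/eqP => [[E]]; by rewrite E eqxx in nk'.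
  - apply/eqP => E; by rewrite -E eqxx in Hc.
  - rewrite /=; lia.
  - rewrite /=; lia.
move=> /hasPn Hno.
have kT := prefix_sub _ _ Hpre _ Hk.
have rT : prow y \in inorder T by rewrite Hin; apply: map_f.
have dle : d k <= d (prow y).
  apply: (key_lemma d T Hb Hh tau Hpre k (prow y) Hk rT) => k' k'in nk' btw.
  by have := Hno _ k'in; rewrite nk' btw.
have [q qA [rq cq]] := Hq dle.
exists q; first exact: PA.
split.
- by apply: contraNneq xA => <-.
- by apply: contra_neq Hr => E; rewrite -rq E.
- exact: cq.
- rewrite rq; lia.
Qed.

Lemma arith1 (c L m1 m2 py : int) : c <= L -> L <= m1 -> m2 <= py ->
  m1 - L <= m2 - L -> Num.min c py <= m1 <= Num.max c py.
Proof. lia. Qed.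
Lemma arith2 (c R m1 m2 py : int) : R <= c -> m1 <= R -> py <= m2 ->
  R - m1 <= R - m2 -> Num.min c py <= m1 <= Num.max c py.
Proof. lia. Qed.

Lemma arith3 (c L R : int) : c \in [:: L; R; L - 1; R + 1] -> (c <= L) || (R <= c).
Proof. rewrite !inE => /or4P [] /eqP ->; lia. Qed.

Lemma core2 A T tau (c k : int) (y : point) :
  arborally_satisfied A -> doubly_congruent A T -> is_prefix tau T ->
  (c <= leftmost_col A) || (rightmost_col A <= c) ->
  k \in inorder tau -> y \in A -> c != pcol y -> k != prow y ->
  exists2 z, z \in access_column A c tau &
      [/\ z != (c, k), z != y,
          Num.min c (pcol y) <= pcol z <= Num.max c (pcol y) &
          Num.min k (prow y) <= prow z <= Num.max k (prow y)].
Proof.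
move=> HA [HL HR] Hpre Hc Hk yA Hcy Hky.
have kA : k \in rows A.
  by case: HL => Hin _ _; rewrite -Hin; apply: prefix_sub Hpre _ Hk.
have yrc := minl_le _ _ (in_row_cols _ _ yA).
have yrc' := maxl_ge _ _ (in_row_cols _ _ yA).
case/orP: Hc => Hc.
- apply: (@core A T tau c k y _ HA HL Hpre Hk yA Hcy Hky) => dle.
  have [q qA [rq cq]] := row_cols_witness _ _ kA.
  exists q => //; split => //.
  have Lq : leftmost_col A <= pcol q := minl_le _ _ (map_f pcol qA).
  rewrite cq; rewrite cq in Lq; exact: arith1 Hc Lq yrc dle.
- apply: (@core A T tau c k y _ HA HR Hpre Hk yA Hcy Hky) => dle.
  have [q qA [rq cq]] := row_cols_witness_max _ _ kA.
  exists q => //; split => //.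
  have Lq : pcol q <= rightmost_col A := maxl_ge _ _ (map_f pcol qA).
  rewrite cq; rewrite cq in Lq; exact: arith2 Hc Lq yrc' dle.
Qed.

Unset Implicit Arguments.

Theorem mainTheorem5 (A : seq point) (T tau : bst) (c : int) :
  arborally_satisfied A ->
  doubly_congruent A T ->
  top_tree tau T ->
  c \in [:: leftmost_col A; rightmost_col A;
           leftmost_col A - 1; rightmost_col A + 1] ->
  arborally_satisfied (access_column A c tau).
Proof.
move=> HA HD /andP [_ Hpre] Hc4.
have Hc : (c <= leftmost_col A) || (rightmost_col A <= c).
  exact: arith3 Hc4.
move=> x y; rewrite !mem_cat => /orP [xA|/mapP [k Hk ->]] /orP [yA|/mapP [k' Hk' ->]] Hcol Hrow.
- have [z zA H] := HA _ _ xA yA Hcol Hrow.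
  by exists z => //; rewrite mem_cat zA.
- have Hcol' : c != pcol x by rewrite eq_sym.
  have Hrow' : k' != prow x by rewrite eq_sym.
  have [z zP [z1 z2 z3 z4]] := @core2 A T tau c k' x HA HD Hpre Hc Hk' xA Hcol' Hrow'.
  exists z => //; split => //; by rewrite /= minC maxC.
- exact: (@core2 A T tau c k y HA HD Hpre Hc Hk yA) Hcol Hrow.
- by rewrite /= eqxx in Hcol.
Qed.
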